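(* Let $n>k\geq1$, $r=n-k$, $2\leq h\leq n-k$, $k<d\leq n-h$, $\delta=\gcd(h,d-k)$, $s_0=\frac{d-k+\delta}{\delta}$, $s=\frac{d-k+h}{\delta}$, $\ell=s\cdot s_0^n$, and let $\mathcal{C}_3$ be the code defined over a finite field $F$ ($|F|\geq s_0n$, with $s_0n$ distinct elements $\lambda_{i,j}\in F$, $i\in[n]$, $j\in[0,s_0-1]$) by the parity check equations $\sum_{i=1}^n \lambda_{i,a_i}^{t-1} c_{i,(a,b)}=0$ for all $a\in[0,s_0^n-1]$, $b\in[0,s-1]$, $t\in[r]$. Let $\mathcal{H}\subseteq[n]$ with $|\mathcal{H}|=h$, let $\mathcal{R}\subseteq[n]\setminus\mathcal{H}$ with $|\mathcal{R}|=d$, and let $P_1,\ldots,P_{h/\delta}$ be a partition of $\mathcal{H}$ into disjoint subsets of size $\delta$. For $i\in[h/\delta]$ let $\Omega_i=\{0,1,\ldots,s_0-2,\,s_0-2+i\}$, and for $j\in[n]$, $a\in[0,s_0^n-1]$ define $$S^{(i)}_j(a)=\sum_{v=0}^{s_0-2}c_{j,(a(P_i,a|_{P_i}\oplus v\bm 1_\delta),\,v)}+c_{j,(a(P_i,a|_{P_i}\oplus(s_0-1)\bm 1_\delta),\,s_0-2+i)}.$$ Then for each $i\in[h/\delta]$ and every codeword of $\mathcal{C}_3$, the symbols $\{S^{(i)}_j(a): j\in\mathcal{R},\ a\in[0,s_0^n-1]\}$ determine both $\{c_{j,(a,b)}: j\in P_i,\ a\in[0,s_0^n-1],\ b\in\Omega_i\}$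 and $\{S^{(i)}_j(a): j\in\mathcal{H}\setminus P_i,\ a\in[0,s_0^n-1]\}$.
   Context: Notation: $[n]=\{1,\ldots,n\}$, $[i,j]=\{i,\ldots,j\}$. Each $\tau\in[0,\ell-1]$ is written uniquely as $\tau=b\cdot s_0^n+\sum_{i=1}^n a_i s_0^{i-1}$ with $b\in[0,s-1]$, $a_i\in[0,s_0-1]$; we write $a=(a_1,\ldots,a_n)$ and $\tau=(a,b)$, and $\bm c_i=(c_{i,0},\ldots,c_{i,\ell-1})\in F^\ell$ with $c_{i,(a,b)}=c_{i,\tau}$. For $\mathcal{X}\subseteq[n]$, $a|_{\mathcal{X}}$ denotes the vector of digits $(a_x)_{x\in\mathcal{X}}$, and for $\bm v\in[0,s_0-1]^{|\mathcal{X}|}$, $a(\mathcal{X},\bm v)$ is the integer whose digits on $\mathcal{X}$ equal $\bm v$ and whose other digits equal those of $a$. The operation $\oplus$ is digitwise addition modulo $s_0$, and $\bm 1_\delta$ is the all-one vector of length $\delta$. *)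

(* Defs.v *)
From HB Require Import structures.
From mathcomp Require Import all_boot all_order all_algebra.
Set Implicit Arguments. Unset Strict Implicit. Unset Printing Implicit Defensive.
Import GRing.Theory.
Local Open Scope ring_scope.

Definition delta (h d k : nat) : nat := gcdn h (d - k).
Definition s0_of (h d k : nat) : nat := ((d - k + delta h d k) %/ delta h d k)%N.
Definition s_of (h d k : nat) : nat := ((d - k + h) %/ delta h d k)%N.

(* A symbol index tau = (a, b): a is the digit vector (a_1,...,a_n) in
   [0,s0-1]^n (encoded as a finite function 'I_n -> 'I_s0), b in [0,s-1].
   A codeword is c : 'I_n -> digits -> 'I_s -> F, c i a b = c_{i,(a,b)}. *)
Definition digits (n s0 : nat) := {ffun 'I_n -> 'I_s0}.

(* Read c_{j,(a,b)} with b given as a natural number (0 if b >= s,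
   never used in the statement since all used b are < s). *)
Definition cat (F : Type) (zero : F) (s : nat) (f : 'I_s -> F) (m : nat) : F :=
  match insub m with Some b => f b | None => zero end.

(* a(P, a|_P (+) v 1) : add v modulo s0 to every digit indexed by P *)
Definition shiftd (n s0 : nat) (P : {set 'I_n}) (v : nat) (a : digits n s0)
  : digits n s0 :=
  [ffun x => if x \in P then insubd (a x) (((a x : nat) + v) %% s0)%N else a x].

Definition in_C3 (F : fieldType) (n r s0 s : nat) (lam : 'I_n -> 'I_s0 -> F)
  (c : 'I_n -> digits n s0 -> 'I_s -> F) : Prop :=
  forall (a : digits n s0) (b : 'I_s) (t : 'I_r),
    \sum_(i < n) (lam i (a i)) ^+ t * c i a b = 0.

(* S^{(i)}_j(a), with i given 1-indexed as a natural number *)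
Definition Ssym (F : fieldType) (n s0 s : nat)
  (c : 'I_n -> digits n s0 -> 'I_s -> F) (P : {set 'I_n}) (i : nat)
  (j : 'I_n) (a : digits n s0) : F :=
  \sum_(v < s0.-1) cat 0 (c j (shiftd P v a)) v
  + cat 0 (c j (shiftd P s0.-1 a)) (s0.-2 + i)%N.

(* Main.v *)
Require Import Defs.
From HB Require Import structures.
From mathcomp Require Import all_boot all_order all_algebra.
From mathcomp Require Import zify.
Import GRing.Theory.
Local Open Scope ring_scope.

Lemma vander0 (F : fieldType) (I : finType) (A : {set I}) (x y : I -> F) (r : nat) :
  {in A &, injective x} -> (#|A| <= r)%N -> (forall l, l \notin A -> y l = 0) ->
  (forall t, (t < r)%N -> \sum_l x l ^+ t * y l = 0) -> forall l, y l = 0.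
Proof.
move=> xinj hA hy ht l0; case: (boolP (l0 \in A)) => [l0A|]; last exact: hy.
pose p := \prod_(l <- enum (A :\ l0)) ('X - (x l)%:P).
have sp : (size p <= r)%N.
  by rewrite size_prod_XsubC -cardE (cardsD1 l0 A) l0A in hA *.
have hp : forall z, p.[z] = \prod_(l in A :\ l0) (z - x l).
  by move=> z; rewrite horner_prod big_enum /=; apply: eq_bigr => l _; rewrite hornerXsubC.
have : \sum_l p.[x l] * y l = 0.
  under eq_bigr do rewrite horner_coef mulr_suml.
  rewrite exchange_big /= big1 // => t _.
  under eq_bigr do rewrite -mulrA.
  by rewrite -mulr_sumr ht ?mulr0 // (leq_trans _ sp).
rewrite (bigD1 l0) //= big1 ?addr0 => [/eqP|l ll0].
  rewrite mulf_eq0 => /orP [|/eqP //].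
  rewrite hp => /eqP h0; exfalso; move: h0; apply/eqP.
  apply/GRing.prodf_neq0 => l; rewrite !inE => /andP [ll0 lA].
  rewrite subr_eq0; apply/eqP => e; move/eqP: ll0; apply; exact: xinj.
case: (boolP (l \in A)) => [lA|/hy ->]; last by rewrite mulr0.
by rewrite hp (bigD1 l) ?inE ?ll0 //= subrr mul0r mul0r.
Qed.

Lemma cat_sub (F : fieldType) (s : nat) (f g : 'I_s -> F) m :
  Defs.cat 0 (fun b => f b - g b) m = Defs.cat 0 f m - Defs.cat 0 g m.
Proof. by rewrite /Defs.cat; case: insub => [b|] //; rewrite subr0. Qed.

Lemma cat_val (F : fieldType) (s : nat) (f : 'I_s -> F) (b : 'I_s) :
  Defs.cat 0 f b = f b.
Proof. by rewrite /Defs.cat valK. Qed.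

Lemma cat_out (F : fieldType) (s : nat) (f : 'I_s -> F) m :
  (s <= m)%N -> Defs.cat 0 f m = 0.
Proof. by move=> hm; rewrite /Defs.cat insubF // ltnNge hm. Qed.

Lemma sum_split_last (F : fieldType) (N : nat) (f : nat -> F) :
  (0 < N)%N -> \sum_(v < N) f v = \sum_(v < N.-1) f v + f N.-1.
Proof. by case: N => // N _; rewrite big_ord_recr. Qed.

Lemma shiftdK (n s0 : nat) (P : {set 'I_n}) (v : nat) (a : digits n s0) :
  (v <= s0)%N -> shiftd P v (shiftd P (s0 - v) a) = a.
Proof.
move=> hv; apply/ffunP => x; rewrite !ffunE.
case: ifP => xP; last by rewrite xP.
apply: val_inj => /=.
have s0p : (0 < s0)%N by have := ltn_ord (a x); lia.
rewrite xP !val_insubd !ltn_pmod //= modnDml -addnA subnK // modnDr.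
by rewrite modn_small.
Qed.
Theorem lemma1 (F : finFieldType) (n k h d : nat)
  (hkn : (1 <= k < n)%N)
  (hh : (2 <= h <= n - k)%N)
  (hd : (k < d <= n - h)%N)
  (lam : 'I_n -> 'I_(s0_of h d k) -> F)
  (hF : (s0_of h d k * n <= #|F|)%N)
  (lam_inj : forall (i i' : 'I_n) (j j' : 'I_(s0_of h d k)),
      lam i j = lam i' j' -> i = i' /\ j = j')
  (H R : {set 'I_n})
  (hH : #|H| = h) (hRH : R \subset ~: H) (hR : #|R| = d)
  (P : 'I_(h %/ delta h d k) -> {set 'I_n})
  (hPcard : forall i, #|P i| = delta h d k)
  (hPdisj : forall i j, i != j -> [disjoint P i & P j])
  (hPcover : \bigcup_(i < h %/ delta h d k) P i = H) :
  forall (i : 'I_(h %/ delta h d k))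
         (c c' : 'I_n -> digits n (s0_of h d k) -> 'I_(s_of h d k) -> F),
    in_C3 (n - k) lam c -> in_C3 (n - k) lam c' ->
    (forall j a, j \in R ->
       Ssym c (P i) i.+1 j a = Ssym c' (P i) i.+1 j a) ->
    (forall j a (b : 'I_(s_of h d k)), j \in P i ->
       ((b < (s0_of h d k).-1)%N \/ (b : nat) = ((s0_of h d k).-2 + i.+1)%N) ->
       c j a b = c' j a b)
    /\
    (forall j a, j \in H :\: P i ->
       Ssym c (P i) i.+1 j a = Ssym c' (P i) i.+1 j a).
Proof.
move=> i c c' Cc Cc' hRS.
have dlp : (0 < delta h d k)%N by rewrite /delta gcdn_gt0; apply/orP; left; lia.
have s0p : (0 < s0_of h d k)%N by rewrite /s0_of divn_gt0 // leq_addl.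
have s0dl : (s0_of h d k * delta h d k <= d - k + delta h d k)%N by exact: leq_divM.
have PiH : P i \subset H by rewrite -hPcover; exact: (bigcup_sup i).
have RnP : forall j, j \in R -> j \notin P i.
  move=> j jR; apply/negP => jP; move/subsetP: hRH => /(_ j jR).
  by rewrite inE (subsetP PiH j jP).
pose e := fun j a b => c j a b - c' j a b.
have Ce : in_C3 (n - k) lam e.
  move=> a b t; rewrite /e; under eq_bigr do rewrite mulrBr.
  by rewrite sumrB Cc Cc' subrr.
have Se : forall j a, Ssym e (P i) i.+1 j a = Ssym c (P i) i.+1 j a - Ssym c' (P i) i.+1 j a.
  move=> j a; rewrite /Ssym.
  under eq_bigr => v _ do rewrite (@cat_sub _ _ (c j _) (c' j _)).
  by rewrite (@cat_sub _ _ (c j _) (c' j _)) sumrB opprD addrACA.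
pose bv := fun v : nat => if (v < (s0_of h d k).-1)%N then v else ((s0_of h d k).-2 + i.+1)%N.
pose y := fun a (l : 'I_n * 'I_(s0_of h d k)) => if l.1 \in P i then Defs.cat 0 (e l.1 (shiftd (P i) l.2 a)) (bv l.2)
   else if (l.2 == 0 :> nat) then Ssym e (P i) i.+1 l.1 a else 0.
have Sid : forall j a, Ssym e (P i) i.+1 j a = \sum_(v < (s0_of h d k)) Defs.cat 0 (e j (shiftd (P i) v a)) (bv v).
  move=> j a.
  rewrite (@sum_split_last _ _ (fun v => Defs.cat 0 (e j (shiftd (P i) v a)) (bv v)) s0p) /Ssym /bv ltnn.
  by congr (_ + _); apply: eq_bigr => v _; rewrite ltn_ord.
have key : forall a l, y a l = 0.
  move=> a.
  pose A := [set l : 'I_n * 'I_(s0_of h d k) | l.1 \in P i] :|: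
            [set l : 'I_n * 'I_(s0_of h d k) | [&& l.1 \notin P i, l.1 \notin R & (l.2 == 0 :> nat)]].
  apply: (@vander0 _ _ A (fun l => lam l.1 (shiftd (P i) l.2 a l.1)) (y a) (n - k)).
  - move=> [j v] [j' v'] /=; rewrite !inE /= => h1 h2 /lam_inj [ejj' ev].
    subst j'; case: (boolP (j \in P i)) => jP.
      move: ev; rewrite !ffunE jP => /(congr1 val); rewrite !val_insubd !ltn_pmod //.
      move/eqP; rewrite eqn_modDl !modn_small // => /eqP ev.
      by congr pair; apply: val_inj.
    move: h1 h2; rewrite (negbTE jP) /= => /andP [_ /eqP h1] /andP [_ /eqP h2].
    by congr pair; apply: val_inj; rewrite /= h1 h2.
  - rewrite (leq_trans (leq_card_setU _ _)) //.
    have -> : [set l : 'I_n * 'I_(s0_of h d k) | l.1 \in P i] = setX (P i) [set: 'I_(s0_of h d k)].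
      by apply/setP => l; rewrite !inE andbT.
    rewrite cardsX cardsT card_ord hPcard.
    have h2 : (#|[set l : 'I_n * 'I_(s0_of h d k) | [&& l.1 \notin P i, l.1 \notin R & (l.2 == 0 :> nat)]]|
               <= #|~: (P i :|: R)|)%N.
      apply: leq_trans (leq_imset_card (fun j => (j, Ordinal s0p)) _).
      apply: subset_leq_card; apply/subsetP => -[j v]; rewrite inE /= => /and3P [jP jR /eqP v0].
      have -> : v = Ordinal s0p by apply: val_inj.
      by apply/imsetP; exists j => //; rewrite !inE negb_or jP jR.
    have hc := cardsC (P i :|: R); rewrite card_ord in hc.
    have hPR : #|P i :|: R| = (delta h d k + d)%N.
      rewrite cardsU hPcard hR.
      have -> : P i :&: R = set0.
        apply/setP => j; rewrite !inE; case jR: (j \in R); last by rewrite andbF.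
        by rewrite (negbTE (RnP j jR)).
      by rewrite cards0 subn0.
    have hdlh : (delta h d k <= h)%N by rewrite -(hPcard i) -hH; apply: subset_leq_card.
    have s0dl' : (delta h d k * s0_of h d k <= d - k + delta h d k)%N by rewrite mulnC.
    move: h2 s0dl'; move: (delta h d k * s0_of h d k)%N => X.
    rewrite hPR in hc => h2 hX; apply: leq_trans (leq_add hX h2) _; lia.
  - move=> [j v]; rewrite !inE /= negb_or => /andP [jP hA].
    rewrite /y /= (negbTE jP); case: eqP => // v0.
    rewrite Se hRS ?subrr //.
    by move: hA; rewrite jP v0 eqxx andbT /= negbK.
  - move=> t ht.
    have -> : \sum_(l : 'I_n * 'I_(s0_of h d k)) lam l.1 (shiftd (P i) l.2 a l.1) ^+ t * y a l =
      \sum_(j < n) \sum_(v < s0_of h d k) lam j (shiftd (P i) v a j) ^+ t * y a (j, v).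
      by rewrite pair_bigA; apply: eq_bigr => -[j v] _.
    transitivity (\sum_(j < n) \sum_(v < s0_of h d k) lam j (shiftd (P i) v a j) ^+ t *
        Defs.cat 0 (e j (shiftd (P i) v a)) (bv v)).
      apply: eq_bigr => j _; rewrite /y /=.
      case: (boolP (j \in P i)) => jP //.
      have hsh : forall v, shiftd (P i) v a j = a j by move=> v; rewrite ffunE (negbTE jP).
      under eq_bigr do rewrite hsh.
      under [RHS]eq_bigr do rewrite hsh.
      rewrite -mulr_sumr -[RHS]mulr_sumr -Sid; congr (_ * _); rewrite (bigD1 (Ordinal s0p)) //= big1 ?addr0 // => v hv.
      case: eqP => // hv0.
      by exfalso; move/eqP: hv; apply; apply: val_inj.
    rewrite exchange_big big1 // => v _.
    case: (ltnP (bv v) (s_of h d k)) => hb.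
      apply: etrans (Ce (shiftd (P i) v a) (Ordinal hb) (Ordinal ht)).
      apply: eq_bigr => j _; congr (_ * _).
      by rewrite -[bv v]/(nat_of_ord (Ordinal hb)) cat_val.
    by apply: big1 => j _; rewrite cat_out ?mulr0.
split.
  move=> j a b jP hb.
  have [v hv1 hv2] : exists2 v : 'I_(s0_of h d k), bv v = b & (v <= s0_of h d k)%N.
    case hlt: (b < (s0_of h d k).-1)%N.
      have hv : (b < s0_of h d k)%N by lia.
      exists (Ordinal hv); [rewrite /bv /=; case: ifP => // hf; by rewrite hlt in hf | exact: ltnW].
    have hv : ((s0_of h d k).-1 < s0_of h d k)%N by lia.
    exists (Ordinal hv) => //=; last exact: ltnW.
    rewrite /bv /= ltnn; case: hb => [|->] //; by rewrite hlt.
  have := key (shiftd (P i) (s0_of h d k - v) a) (j, v).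
  rewrite /y /= jP shiftdK // hv1 cat_val /e => /eqP; rewrite subr_eq0 => /eqP.
  done.
move=> j a; rewrite inE => /andP [jnP jH].
apply/eqP; rewrite -subr_eq0 -Se; apply/eqP.
have := key a (j, Ordinal s0p); by rewrite /y /= (negbTE jnP).
Qed.
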